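(* Let $n$ be even and let $\mathcal{J}\subseteq H(F_n)$ be the Jordan subalgebra $$\mathcal{J}=\left\{\begin{pmatrix} A & B\\ -B & A\end{pmatrix} : A\in F_{n/2} \text{ symmetric},\ B\in F_{n/2}\text{ skew-symmetric}\right\}.$$ Then every automorphism of the Jordan algebra $\mathcal{J}$ is induced by (i.e. is the restriction of) an automorphism of the Jordan algebra $H(F_n)$.
   Context: $F$ is an algebraically closed field of characteristic different from $2$. $F_k$ denotes the algebra of $k\times k$ matrices over $F$, $F_k^{(+)}$ is the Jordan algebra on $F_k$ with product $X\odot Y=\frac{XY+YX}{2}$, and $H(F_n)$ is the Jordan subalgebra of $F_n^{(+)}$ consisting of all symmetric matrices ($X^t=X$). The algebra $\mathcal{J}$ above is isomorphic to $F_{n/2}^{(+)}$ (via $A+iB\mapsto$ the displayed block matrix, $i^2=-1$). *)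

(* Defs.v *)
From HB Require Import structures.
From mathcomp Require Import all_boot all_order all_algebra.
Set Implicit Arguments. Unset Strict Implicit. Unset Printing Implicit Defensive.
Import GRing.Theory.
Local Open Scope ring_scope.

Definition jprod (F : fieldType) (k : nat) (X Y : 'M[F]_k) : 'M[F]_k :=
  2%:R^-1 *: (X *m Y + Y *m X).

Definition symmx (F : fieldType) (k : nat) (X : 'M[F]_k) : Prop := X^T = X.

Definition in_J (F : fieldType) (m : nat) (X : 'M[F]_(m + m)) : Prop :=
  exists (A B : 'M[F]_m), A^T = A /\ B^T = - B /\ X = block_mx A B (- B) A.

Definition jordan_aut_on (F : fieldType) (k : nat) (S : 'M[F]_k -> Prop)
  (f : 'M[F]_k -> 'M[F]_k) : Prop :=
  [/\ (forall X, S X -> S (f X)),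
      (forall (a : F) X Y, S X -> S Y -> f (a *: X + Y) = a *: f X + f Y),
      (forall X Y, S X -> S Y -> f (jprod X Y) = jprod (f X) (f Y)),
      (forall X Y, S X -> S Y -> f X = f Y -> X = Y) &
      (forall Y, S Y -> exists X, S X /\ f X = Y)].

(* Main.v *)
Require Import Defs.
From HB Require Import structures.
From mathcomp Require Import all_boot all_order all_algebra.
From mathcomp Require Import ring.
Set Implicit Arguments. Unset Strict Implicit. Unset Printing Implicit Defensive.
Import GRing.Theory.
Local Open Scope ring_scope.

Lemma mx2_eq0 (F : fieldType) (m n : nat) (c2 : (2%:R:F) != 0) (X : 'M[F]_(m,n)) :
  X *+ 2 = 0 -> X = 0.
Proof.
move=> h; have /eqP : (2%:R : F) *: X = 0 by rewrite scaler_nat.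
by rewrite scaler_eq0 (negPf c2) => /eqP.
Qed.

Lemma idem_anti (F : fieldType) (m : nat) (c2 : (2%:R:F) != 0) (e x : 'M[F]_m) :
  e *m e = e -> e *m x + x *m e = 0 -> e *m x = 0 /\ x *m e = 0.
Proof.
move=> ee h.
have h1 : e *m x + e *m x *m e = 0.
  by have := congr1 (mulmx e) h; rewrite mulmxDr !mulmxA ee mulmx0.
have h2 : e *m x *m e + x *m e = 0.
  by have := congr1 (mulmx^~ e) h; rewrite /= mulmxDl -(mulmxA x) ee mul0mx.
have h3 : e *m x = x *m e.
  move/eqP: h1; rewrite addr_eq0 => /eqP ->.
  by move/eqP: h2; rewrite addrC addr_eq0 => /eqP ->.
have h4 : e *m x = 0 by apply: (mx2_eq0 c2); rewrite mulr2n {2}h3 h.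
by split=> //; rewrite -h3.
Qed.

Lemma idem_half (F : fieldType) (m : nat) (e x : 'M[F]_m) :
  e *m e = e -> e *m x + x *m e = x -> e *m x *m e = 0.
Proof.
move=> ee h.
have h1 : e *m x + e *m x *m e = e *m x.
  by have := congr1 (mulmx e) h; rewrite mulmxDr !mulmxA ee.
by apply/eqP; rewrite -(addrI _ (etrans h1 (esym (addr0 _)))).
Qed.
Definition jrel (F : fieldType) (m : nat) (Fm : 'I_m -> 'I_m -> 'M[F]_m) :=
  forall i j k l, Fm i j *m Fm k l + Fm k l *m Fm i j =
                  Fm i l *+ (j == k) + Fm k j *+ (l == i).


Lemma fidem (F : fieldType) (m : nat) (c2 : (2%:R:F) != 0) (Fm : 'I_m -> 'I_m -> 'M[F]_m)
  (H : jrel Fm) i : Fm i i *m Fm i i = Fm i i.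
Proof.
have := H i i i i; rewrite eqxx -!mulr2n => h.
apply/eqP; rewrite -subr_eq0; apply/eqP/(mx2_eq0 c2).
by rewrite mulrnBl h subrr.
Qed.

Lemma forth (F : fieldType) (m : nat) (c2 : (2%:R:F) != 0) (Fm : 'I_m -> 'I_m -> 'M[F]_m)
  (H : jrel Fm) j k l : j != k -> j != l ->
  Fm j j *m Fm k l = 0 /\ Fm k l *m Fm j j = 0.
Proof.
move=> jk jl; apply: (idem_anti c2 (fidem c2 H j)).
by rewrite H (negPf jk) eq_sym (negPf jl) !mulr0n addr0.
Qed.

Lemma fhalf1 (F : fieldType) (m : nat) (Fm : 'I_m -> 'I_m -> 'M[F]_m)
  (H : jrel Fm) i j : i != j ->
  Fm i i *m Fm i j + Fm i j *m Fm i i = Fm i j.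
Proof. by move=> ij; rewrite H eqxx eq_sym (negPf ij) mulr0n addr0. Qed.

Lemma fhalf2 (F : fieldType) (m : nat) (Fm : 'I_m -> 'I_m -> 'M[F]_m)
  (H : jrel Fm) i j : i != j ->
  Fm j j *m Fm i j + Fm i j *m Fm j j = Fm i j.
Proof. by move=> ij; rewrite H eqxx eq_sym (negPf ij) mulr0n add0r. Qed.

Lemma fa (F : fieldType) (m : nat) (c2 : (2%:R:F) != 0) (Fm : 'I_m -> 'I_m -> 'M[F]_m)
  (H : jrel Fm) i j : i != j -> Fm i i *m Fm i j = Fm i j *m Fm j j.
Proof.
move=> ij; have [ef fe] := forth c2 H ij ij.
have e1 : Fm i i *m Fm i j = Fm i i *m Fm i j *m Fm j j.
  by rewrite -{1}(fhalf2 H ij) mulmxDr !mulmxA ef mul0mx add0r.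
have e2 : Fm i j *m Fm j j = Fm i i *m Fm i j *m Fm j j.
  by rewrite -{1}(fhalf1 H ij) mulmxDl -(mulmxA (Fm i j)) ef mulmx0 addr0.
exact: (etrans e1 (esym e2)).
Qed.

Lemma fb (F : fieldType) (m : nat) (c2 : (2%:R:F) != 0) (Fm : 'I_m -> 'I_m -> 'M[F]_m)
  (H : jrel Fm) i j : i != j -> Fm i j *m Fm i i = Fm j j *m Fm i j.
Proof.
move=> ij; have [ef fe] := forth c2 H ij ij.
have ji : j != i by rewrite eq_sym.
have [fe' ef'] := forth c2 H ji ji.
have e1 : Fm i j *m Fm i i = Fm j j *m Fm i j *m Fm i i.
  by rewrite -{1}(fhalf2 H ij) mulmxDl -(mulmxA (Fm i j)) fe' mulmx0 addr0.
have e2 : Fm j j *m Fm i j = Fm j j *m Fm i j *m Fm i i.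
  by rewrite -{1}(fhalf1 H ij) mulmxDr !mulmxA fe' mul0mx add0r.
exact: (etrans e1 (esym e2)).
Qed.

Lemma fsq (F : fieldType) (m : nat) (c2 : (2%:R:F) != 0) (Fm : 'I_m -> 'I_m -> 'M[F]_m)
  (H : jrel Fm) i j : i != j -> Fm i j *m Fm i j = 0.
Proof.
move=> ij; apply: (mx2_eq0 c2); rewrite mulr2n H eq_sym (negPf ij).
by rewrite !mulr0n addr0.
Qed.
Lemma mxdelta_entry (R : fieldType) m n p q (A : 'M[R]_(m,n)) (B : 'M_(p,q)) a b c d :
  (A *m delta_mx b c *m B) a d = A a b * B c d.
Proof.
rewrite mxE (bigD1 c) //= big1 => [|k kc].
  rewrite addr0 mxE (bigD1 b) //= big1 => [|l lb].
    by rewrite addr0 !mxE !eqxx mulr1.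
  by rewrite mxE (negPf lb) mulr0.
by rewrite mxE big1 ?mul0r // => l _; rewrite mxE (negPf kc) andbF mulr0.
Qed.

Lemma mx_nz_entry (R : fieldType) m n (A : 'M[R]_(m,n)) :
  A != 0 -> exists a b, A a b != 0.
Proof.
move=> nA; case: (boolP [exists a, exists b, A a b != 0]).
  by case/existsP=> a /existsP[b hab]; exists a, b.
move=> hn; case/eqP: nA; apply/matrixP=> a b; rewrite mxE.
apply/eqP/negPn/negP=> hab; case/negP: hn.
by apply/existsP; exists a; apply/existsP; exists b.
Qed.

Lemma mx_prime (R : fieldType) m (A B : 'M[R]_m) :
  (forall M, A *m M *m B = 0) -> A = 0 \/ B = 0.
Proof.
move=> h; case: (eqVneq A 0) => [->|nA]; first by left.
right; have [a [b hab]] := mx_nz_entry nA.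
apply/matrixP=> c d; rewrite mxE.
have := congr1 (fun M : 'M[R]_m => M a d) (h (delta_mx b c)).
rewrite /= mxdelta_entry mxE => /eqP; rewrite mulf_eq0 (negPf hab) /=.
by move/eqP.
Qed.
Lemma fdich (F : fieldType) (m : nat) (c2 : (2%:R:F) != 0) (Fm : 'I_m -> 'I_m -> 'M[F]_m)
  (H : jrel Fm) (Hs : forall j (M : 'M_m), exists c, Fm j j *m M *m Fm j j = c *: Fm j j)
  i j : i != j -> Fm i j *m Fm i i = 0 \/ Fm i i *m Fm i j = 0.
Proof.
move=> ij.
have h : forall M, (Fm i i *m Fm i j) *m M *m (Fm i j *m Fm i i) = 0.
  move=> M; rewrite (fa c2 H ij) (fb c2 H ij).
  have -> : Fm i j *m Fm j j *m M *m (Fm j j *m Fm i j) =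
            Fm i j *m (Fm j j *m M *m Fm j j) *m Fm i j by rewrite !mulmxA.
  have [c ->] := Hs j M.
  rewrite -scalemxAr -scalemxAl -(fa c2 H ij) -mulmxA (fsq c2 H ij) mulmx0.
  by rewrite scaler0.
by case: (mx_prime h) => ->; [right|left].
Qed.

Lemma fnz_excl (F : fieldType) (m : nat) (Fm : 'I_m -> 'I_m -> 'M[F]_m)
  (H : jrel Fm) (Hnz : forall i j, Fm i j != 0) i j : i != j ->
  Fm i j *m Fm i i = 0 -> Fm i i *m Fm i j = 0 -> False.
Proof.
move=> ij h1 h2; have := fhalf1 H ij; rewrite h1 h2 addr0 => h.
by have := Hnz i j; rewrite -h eqxx.
Qed.

Lemma fsym1 (F : fieldType) (m : nat) (c2 : (2%:R:F) != 0) (Fm : 'I_m -> 'I_m -> 'M[F]_m)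
  (H : jrel Fm) (Hnz : forall i j, Fm i j != 0) i j : i != j ->
  Fm i j *m Fm i i = 0 -> Fm j j *m Fm j i = 0 -> False.
Proof.
move=> ij hx hy; have ji : j != i by rewrite eq_sym.
have xf : Fm i j = Fm i j *m Fm j j.
  by rewrite -(fa c2 H ij) -{1}(fhalf1 H ij) hx addr0.
have fx : Fm j j *m Fm i j = 0 by rewrite -(fb c2 H ij).
have yf : Fm j i = Fm j i *m Fm j j.
  by rewrite -{1}(fhalf1 H ji) hy add0r.
have xy : Fm i j *m Fm j i = 0 by rewrite xf -mulmxA hy mulmx0.
have yx : Fm j i *m Fm i j = 0.
  by rewrite yf -mulmxA fx mulmx0.
have := H i j j i; rewrite xy yx addr0 !eqxx => /esym /eqP.
rewrite addr_eq0 => /eqP he.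
have := congr1 (mulmx (Fm i i)) he.
rewrite (fidem c2 H) mulmxN (proj1 (forth c2 H ij ij)) oppr0 => hz.
by have := Hnz i i; rewrite hz eqxx.
Qed.
Lemma fchain1 (F : fieldType) (m : nat) (c2 : (2%:R:F) != 0) (Fm : 'I_m -> 'I_m -> 'M[F]_m)
  (H : jrel Fm) (Hnz : forall i j, Fm i j != 0) i j k : i != j -> j != k -> k != i ->
  Fm i j *m Fm i i = 0 -> Fm j j *m Fm j k = 0 -> False.
Proof.
move=> ij jk ki hx hy.
have xf : Fm i j = Fm i j *m Fm j j.
  by rewrite -(fa c2 H ij) -{1}(fhalf1 H ij) hx addr0.
have fx : Fm j j *m Fm i j = 0 by rewrite -(fb c2 H ij).
have yf : Fm j k = Fm j k *m Fm j j.
  by rewrite -{1}(fhalf1 H jk) hy add0r.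
have xy : Fm i j *m Fm j k = 0 by rewrite xf -mulmxA hy mulmx0.
have yx : Fm j k *m Fm i j = 0 by rewrite yf -mulmxA fx mulmx0.
have := H i j j k; rewrite xy yx addr0 eqxx (negPf ki) mulr0n addr0 mulr1n => /esym hz.
by have := Hnz i k; rewrite hz eqxx.
Qed.

Lemma fchain2 (F : fieldType) (m : nat) (c2 : (2%:R:F) != 0) (Fm : 'I_m -> 'I_m -> 'M[F]_m)
  (H : jrel Fm) (Hnz : forall i j, Fm i j != 0) i j k : i != j -> j != k -> k != i ->
  Fm i i *m Fm i j = 0 -> Fm j k *m Fm j j = 0 -> False.
Proof.
move=> ij jk ki hx hy.
have ik : i != k by rewrite eq_sym.
have kj : k != j by rewrite eq_sym.
have xe : Fm i j = Fm i j *m Fm i i.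
  by rewrite -{1}(fhalf1 H ij) hx add0r.
have yf : Fm j k = Fm j k *m Fm k k.
  by rewrite -(fa c2 H jk) -{1}(fhalf1 H jk) hy addr0.
have xy : Fm i j *m Fm j k = 0.
  by rewrite xe -mulmxA (proj1 (forth c2 H ij ik)) mulmx0.
have yx : Fm j k *m Fm i j = 0.
  by rewrite yf -mulmxA (proj1 (forth c2 H ki kj)) mulmx0.
have := H i j j k; rewrite xy yx addr0 eqxx (negPf ki) mulr0n addr0 mulr1n => /esym hz.
by have := Hnz i k; rewrite hz eqxx.
Qed.

Lemma fprop (F : fieldType) (m : nat) (c2 : (2%:R:F) != 0) (Fm : 'I_m -> 'I_m -> 'M[F]_m)
  (H : jrel Fm) (Hnz : forall i j, Fm i j != 0)
  (Hs : forall j (M : 'M_m), exists c, Fm j j *m M *m Fm j j = c *: Fm j j)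
  i j k : i != j -> j != k ->
  (Fm i j *m Fm i i = 0 -> Fm j k *m Fm j j = 0) /\
  (Fm i i *m Fm i j = 0 -> Fm j j *m Fm j k = 0).
Proof.
move=> ij jk; case: (eqVneq k i) => [->|ki].
  have ji : j != i by rewrite eq_sym.
  split=> h; case: (fdich c2 H Hs ji) => // h'.
    by case: (fsym1 c2 H Hnz ij h h').
  by case: (fsym1 c2 H Hnz ji h' h).
split=> h; case: (fdich c2 H Hs jk) => // h'.
  by case: (fchain1 c2 H Hnz ij jk ki h h').
by case: (fchain2 c2 H Hnz ij jk ki h h').
Qed.

Lemma fglobal (F : fieldType) (m : nat) (c2 : (2%:R:F) != 0) (Fm : 'I_m -> 'I_m -> 'M[F]_m)
  (H : jrel Fm) (Hnz : forall i j, Fm i j != 0)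
  (Hs : forall j (M : 'M_m), exists c, Fm j j *m M *m Fm j j = c *: Fm j j) :
  (forall i j, i != j -> Fm i j *m Fm i i = 0) \/
  (forall i j, i != j -> Fm i i *m Fm i j = 0).
Proof.
case: (boolP [forall i, forall j, (i != j) ==> (Fm i j *m Fm i i == 0)]).
  move/forallP=> h; left=> i j ij.
  by have /forallP/(_ j) := h i; rewrite ij /= => /eqP.
move/forallPn=> [i0 /forallPn [j0]]; rewrite negb_imply => /andP [ij0 hn].
have h0 : Fm i0 i0 *m Fm i0 j0 = 0.
  by case: (fdich c2 H Hs ij0) => // h; rewrite h eqxx in hn.
right=> c d cd; case: (eqVneq j0 c) => [e|j0c].
  by rewrite -e in cd *; apply: (proj2 (fprop c2 H Hnz Hs ij0 cd)).
apply: (proj2 (fprop c2 H Hnz Hs j0c cd)).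
exact: (proj2 (fprop c2 H Hnz Hs ij0 j0c)).
Qed.
Lemma fhom_units (F : fieldType) (m : nat) (c2 : (2%:R:F) != 0) (Fm : 'I_m -> 'I_m -> 'M[F]_m)
  (H : jrel Fm) (Hh : forall i j, i != j -> Fm i j *m Fm i i = 0) :
  forall i j k l, Fm i j *m Fm k l = Fm i l *+ (j == k).
Proof.
have L : forall i j, Fm i i *m Fm i j = Fm i j.
  move=> i j; case: (eqVneq i j) => [<-|ij]; first exact: fidem.
  by rewrite -{2}(fhalf1 H ij) Hh // addr0.
have R : forall i j, Fm i j *m Fm j j = Fm i j.
  move=> i j; case: (eqVneq i j) => [<-|ij]; first exact: fidem.
  by rewrite -(fa c2 H ij) L.
move=> i j k l; case: (eqVneq j k) => [<-|jk]; last first.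
  rewrite mulr0n -(R i j) -(L k l) -mulmxA (mulmxA (Fm j j)).
  by rewrite (proj1 (forth c2 H jk jk)) mul0mx mulmx0.
rewrite mulr1n; case: (eqVneq l i) => [->|li].
  case: (eqVneq i j) => [<-|ij]; first exact: fidem.
  have ji : j != i by rewrite eq_sym.
  have h := H i j j i; rewrite !eqxx !mulr1n in h.
  have := congr1 (fun M => Fm i i *m M *m Fm i i) h.
  rewrite /= !mulmxDr !mulmxDl (fidem c2 H) (proj1 (forth c2 H ij ij)) mul0mx addr0.
  rewrite mulmxA L -(mulmxA (Fm i j)) R.
  have z : Fm i i *m Fm j i = 0.
    by rewrite -(L j i) mulmxA (proj1 (forth c2 H ij ij)) mul0mx.
  by rewrite mulmxA z !mul0mx addr0 (fidem c2 H).
have h := H i j j l; rewrite eqxx (negPf li) mulr0n addr0 mulr1n in h.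
have z : Fm j l *m Fm i j = 0.
  rewrite -(R j l) -(L i j) -mulmxA (mulmxA (Fm l l)).
  by rewrite (proj1 (forth c2 H li li)) mul0mx mulmx0.
by rewrite -h z addr0.
Qed.
Lemma units_S (F : fieldType) n (Fm : 'I_n.+1 -> 'I_n.+1 -> 'M[F]_n.+1)
  (Hu : forall i j k l, Fm i j *m Fm k l = Fm i l *+ (j == k)) (H0 : Fm 0 0 != 0) :
  exists S, S \in unitmx /\ forall i j, Fm i j *m S = S *m delta_mx i j.
Proof.
have [a [b hab]] := mx_nz_entry H0.
pose x : 'cV[F]_n.+1 := Fm 0 0 *m delta_mx b 0.
have xa : x a 0 != 0 by rewrite /x -colE mxE.
have x0 : Fm 0 0 *m x = x by rewrite /x mulmxA Hu eqxx mulr1n.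
pose S : 'M[F]_n.+1 := \matrix_(r, k) (Fm k 0 *m x) r 0.
have colS : forall k, col k S = Fm k 0 *m x.
  by move=> k; apply/matrixP=> r c; rewrite !mxE (ord1 c).
have SE : forall r k, S r k = (Fm k 0 *m x) r 0 by move=> r k; rewrite mxE.
have HS : forall i j, Fm i j *m S = S *m delta_mx i j.
  move=> i j; apply/matrixP=> r k.
  have -> : (Fm i j *m S) r k = col k (Fm i j *m S) r 0 by rewrite [in RHS]mxE.
  rewrite colE -mulmxA -colE colS mulmxA Hu -[S *m _]mulmx1 mxdelta_entry !mxE.
  case: (j == k); first by rewrite mulr1n mulr1.
  by rewrite mulr0n mulr0 big1 // => t _; rewrite mxE mul0r.
exists S; split=> //.
rewrite unitmxE unitfE -det_tr; apply/negP => /det0P [v vn0 vS].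
case/negP: vn0; rewrite -[v]trmxK.
have Sw : S *m v^T = 0 by rewrite -[S]trmxK -trmx_mul vS trmx0.
suff -> : v^T = 0 by rewrite trmx0.
apply/matrixP=> l c; rewrite (ord1 c) mxE.
have := congr1 (fun M : 'M[F]_(n.+1, 1) => M a 0) (congr1 (mulmx (Fm 0 l)) Sw).
rewrite /= mulmxA HS mulmx0 mxdelta_entry SE x0 [X in _ = X]mxE => /eqP.
by rewrite mulf_eq0 (negPf xa) /= !mxE => /eqP.
Qed.
Lemma fsand3 (F : fieldType) (m : nat) (c2 : (2%:R:F) != 0) (Fm : 'I_m -> 'I_m -> 'M[F]_m)
  (H : jrel Fm) j k l :
  Fm j j *m Fm k l *m Fm j j = Fm j j *+ ((k == j) && (l == j)).
Proof.
case: (eqVneq k j) => [->|kj]; case: (eqVneq l j) => [->|lj] /=.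
- by rewrite !(fidem c2 H) mulr1n.
- by rewrite mulr0n (idem_half (fidem c2 H j) (fhalf1 H _)) // eq_sym.
- by rewrite mulr0n (idem_half (fidem c2 H j) (fhalf2 H kj)).
- by rewrite mulr0n (proj1 (forth c2 H _ _)) ?mul0mx // eq_sym.
Qed.

Lemma jordan_class (F : fieldType) (m : nat) (c2 : (2%:R:F) != 0)
  (psi : 'M[F]_m -> 'M[F]_m)
  (Hlin : forall a X Y, psi (a *: X + Y) = a *: psi X + psi Y)
  (Hjor : forall X Y, psi (X *m Y + Y *m X) = psi X *m psi Y + psi Y *m psi X)
  (Hinj : forall X, psi X = 0 -> X = 0)
  (Hsurj : forall Y, exists X, psi X = Y) :
  exists S, S \in unitmx /\
    ((forall Z, psi Z *m S = S *m Z) \/ (forall Z, psi Z *m S = S *m Z^T)).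
Proof.
case: m psi Hlin Hjor Hinj Hsurj => [|n] psi Hlin Hjor Hinj Hsurj.
  exists 1%:M; split; first exact: unitmx1.
  by left=> Z; apply/matrixP=> -[].
have psi0 : psi 0 = 0.
  have h := Hlin 1 0 0; rewrite !scale1r addr0 in h.
  by apply: (addrI (psi 0)); rewrite addr0 -h.
have psiD : forall X Y, psi (X + Y) = psi X + psi Y.
  by move=> X Y; have := Hlin 1 X Y; rewrite !scale1r.
have psiZ : forall a X, psi (a *: X) = a *: psi X.
  by move=> a X; rewrite -[a *: X]addr0 Hlin psi0 addr0.
have psiMn : forall X (b : bool), psi (X *+ b) = psi X *+ b.
  by move=> X [|]; rewrite ?mulr1n ?mulr0n.
pose Fm i j := psi (delta_mx i j).
have psi_sum : forall Z, psi Z = \sum_i \sum_j Z i j *: Fm i j.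
  move=> Z; rewrite {1}(matrix_sum_delta Z) (big_morph psi psiD psi0).
  apply: eq_bigr => i _; rewrite (big_morph psi psiD psi0).
  by apply: eq_bigr => j _; rewrite psiZ.
have H : jrel Fm.
  move=> i j k l; rewrite /Fm -!Hjor; rewrite !mul_delta_mx_cond.
  by rewrite psiD !psiMn.
have Hnz : forall i j, Fm i j != 0.
  move=> i j; apply/eqP=> /Hinj /matrixP /(_ i j).
  by rewrite !mxE !eqxx /= => /eqP; rewrite oner_eq0.
have Hs : forall j (M : 'M_n.+1), exists c, Fm j j *m M *m Fm j j = c *: Fm j j.
  move=> j M; have [Z <-] := Hsurj M.
  exists (\sum_k \sum_l Z k l * ((k == j) && (l == j))%:R).
  rewrite psi_sum mulmx_sumr mulmx_suml scaler_suml; apply: eq_bigr => k _.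
  rewrite mulmx_sumr mulmx_suml scaler_suml; apply: eq_bigr => l _.
  by rewrite -scalemxAr -scalemxAl (fsand3 c2 H) -scalerA scaler_nat.
case: (fglobal c2 H Hnz Hs) => [Hh|Ha].
  have [S [uS HS]] := units_S (fhom_units c2 H Hh) (Hnz 0 0).
  exists S; split=> //; left=> Z.
  rewrite psi_sum {2}(matrix_sum_delta Z) mulmx_suml mulmx_sumr.
  apply: eq_bigr => i _; rewrite mulmx_suml mulmx_sumr.
  by apply: eq_bigr => j _; rewrite -scalemxAl -scalemxAr HS.
pose G i j := Fm j i.
have HG : jrel G.
  by move=> i j k l; rewrite /G H addrC [k == j]eq_sym [i == l]eq_sym.
have HGh : forall i j, i != j -> G i j *m G i i = 0.
  move=> i j ij; rewrite /G -(fa c2 H); last by rewrite eq_sym.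
  by apply: Ha; rewrite eq_sym.
have [S [uS HS]] := units_S (fhom_units c2 HG HGh) (Hnz 0 0).
exists S; split=> //; right=> Z.
rewrite psi_sum (matrix_sum_delta Z^T) [X in _ = S *m X]exchange_big mulmx_suml mulmx_sumr.
apply: eq_bigr => i _; rewrite mulmx_suml mulmx_sumr.
by apply: eq_bigr => j _; rewrite -scalemxAl -scalemxAr mxE; congr (_ *: _); exact: HS.
Qed.
Definition Umx (F : fieldType) (m : nat) (i : F) : 'M[F]_(m + m) :=
  block_mx 1%:M 1%:M i%:M (- i)%:M.
Definition Upmx (F : fieldType) (m : nat) (i : F) : 'M[F]_(m + m) :=
  2^-1 *: block_mx 1%:M (- i)%:M 1%:M i%:M.
Definition Kmx (F : fieldType) (m : nat) : 'M[F]_(m + m) :=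
  block_mx 0 1%:M 1%:M 0.

Lemma smx0 (F : fieldType) n (a : F) : a = 0 -> (a%:M : 'M[F]_n) = 0.
Proof. by move=> ->; apply/matrixP=> x y; rewrite !mxE mul0rn. Qed.

Lemma smxE (F : fieldType) n (a b : F) : a = b -> (a%:M : 'M[F]_n) = b%:M.
Proof. by move=> ->. Qed.

Lemma U1 (F : fieldType) (m : nat) (c2 : (2%:R:F) != 0) (i : F) (hi : i * i = -1) :
  Upmx m i *m Umx m i = 1%:M.
Proof.
rewrite /Upmx /Umx -scalemxAl mulmx_block !mul1mx -!scalar_mxM -!raddfD /=.
rewrite (scalar_mx_block m m) scale_block_mx !scale_scalar_mx.
by congr block_mx; (apply: smx0 || apply: smxE); field: hi.
Qed.
Lemma U2 (F : fieldType) (m : nat) (c2 : (2%:R:F) != 0) (i : F) (hi : i * i = -1)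
  (Z W : 'M[F]_m) :
  Umx m i *m block_mx Z 0 0 W *m Upmx m i =
  block_mx (2^-1 *: (Z + W)) ((2^-1 * i) *: (W - Z))
           ((2^-1 * i) *: (Z - W)) (2^-1 *: (Z + W)).
Proof.
rewrite /Umx /Upmx -scalemxAr !mulmx_block.
rewrite !(mul1mx, mulmx1, mul0mx, mulmx0, addr0, add0r, mul_scalar_mx, mul_mx_scalar).
rewrite scale_block_mx.
by congr block_mx; apply/matrixP=> a b; rewrite !mxE; field: hi.
Qed.

Lemma U3 (F : fieldType) (m : nat) (c2 : (2%:R:F) != 0) (i : F) (hi : i * i = -1) :
  (Umx m i)^T *m Umx m i = 2%:R *: Kmx F m.
Proof.
rewrite /Umx /Kmx tr_block_mx !tr_scalar_mx mulmx_block -!scalar_mxM -!raddfD /=.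
rewrite scale_block_mx !scale_scalar_mx scaler0.
by congr block_mx; (apply: smx0 || apply: smxE); field: hi.
Qed.

Lemma U4 (F : fieldType) (m : nat) (c2 : (2%:R:F) != 0) (i : F) (hi : i * i = -1) :
  (Upmx m i)^T *m Kmx F m *m Upmx m i = 2^-1 *: 1%:M.
Proof.
rewrite /Upmx /Kmx [(2^-1 *: _)^T]linearZ /= -!scalemxAl -scalemxAr tr_block_mx !tr_scalar_mx.
rewrite !mulmx_block !(mul1mx, mulmx1, mul0mx, mulmx0, addr0, add0r).
rewrite -!scalar_mxM -!raddfD /= (scalar_mx_block m m) !scale_block_mx !scale_scalar_mx.
rewrite ?scaler0.
by congr block_mx; (apply: smx0 || apply: smxE); field: hi.
Qed.
Lemma inv_comm (F : fieldType) (m : nat) (S A Y : 'M[F]_m) : S \in unitmx ->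
  A *m S = S *m Y -> invmx S *m A = Y *m invmx S.
Proof.
move=> uS h.
by rewrite -[invmx S *m A]mulmx1 -(mulmxV uS) !mulmxA -(mulmxA _ A) h mulmxA mulVmx // mul1mx.
Qed.

Lemma Dh_K (F : fieldType) (m : nat) (S : 'M[F]_m) : S \in unitmx ->
  (block_mx S 0 0 (invmx S)^T)^T *m Kmx F m *m block_mx S 0 0 (invmx S)^T = Kmx F m.
Proof.
move=> uS; rewrite /Kmx tr_block_mx !trmx0 trmxK !mulmx_block.
rewrite !(mul1mx, mulmx1, mul0mx, mulmx0, addr0, add0r).
by rewrite -trmx_mul mulVmx // trmx1.
Qed.

Lemma Da_K (F : fieldType) (m : nat) (S : 'M[F]_m) : S \in unitmx ->
  (block_mx 0 S (invmx S)^T 0)^T *m Kmx F m *m block_mx 0 S (invmx S)^T 0 = Kmx F m.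
Proof.
move=> uS; rewrite /Kmx tr_block_mx !trmx0 trmxK !mulmx_block.
rewrite !(mul1mx, mulmx1, mul0mx, mulmx0, addr0, add0r).
by rewrite -trmx_mul mulVmx // trmx1.
Qed.

Lemma Dh_comm (F : fieldType) (m : nat) (S Z P : 'M[F]_m) : S \in unitmx ->
  P *m S = S *m Z ->
  block_mx S 0 0 (invmx S)^T *m block_mx Z 0 0 Z^T =
  block_mx P 0 0 P^T *m block_mx S 0 0 (invmx S)^T.
Proof.
move=> uS h; rewrite !mulmx_block !(mul1mx, mulmx1, mul0mx, mulmx0, addr0, add0r).
by rewrite h -!trmx_mul (inv_comm uS h).
Qed.

Lemma Da_comm (F : fieldType) (m : nat) (S Z P : 'M[F]_m) : S \in unitmx ->
  P *m S = S *m Z^T ->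
  block_mx 0 S (invmx S)^T 0 *m block_mx Z 0 0 Z^T =
  block_mx P 0 0 P^T *m block_mx 0 S (invmx S)^T 0.
Proof.
move=> uS h; rewrite !mulmx_block !(mul1mx, mulmx1, mul0mx, mulmx0, addr0, add0r).
by rewrite h -!trmx_mul (inv_comm uS h) trmx_mul trmxK.
Qed.
Definition jemb (F : fieldType) (m : nat) (i : F) (Z : 'M[F]_m) : 'M[F]_(m + m) :=
  Umx m i *m block_mx Z 0 0 Z^T *m Upmx m i.

Lemma UU (F : fieldType) (m : nat) (c2 : (2%:R:F) != 0) (i : F) (hi : i * i = -1)
  (X Y : 'M[F]_(m + m)) :
  Umx m i *m X *m Upmx m i *m (Umx m i *m Y *m Upmx m i) = Umx m i *m (X *m Y) *m Upmx m i.
Proof.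
by rewrite !mulmxA -(mulmxA _ (Upmx m i)) (U1 _ c2 hi) mulmx1 -!mulmxA.
Qed.

Lemma iota_jprod (F : fieldType) (m : nat) (c2 : (2%:R:F) != 0) (i : F) (hi : i * i = -1)
  (Z W : 'M[F]_m) :
  jemb i (jprod Z W) = jprod (jemb i Z) (jemb i W).
Proof.
rewrite /jemb /jprod !(UU c2 hi) -mulmxDl -mulmxDr scalemxAl scalemxAr.
congr (_ *m _ *m _).
rewrite !mulmx_block !(mul1mx, mulmx1, mul0mx, mulmx0, addr0, add0r).
rewrite add_block_mx scale_block_mx !addr0 !scaler0.
by rewrite [(_ *: _)^T]linearZ /= [(_ + _)^T]linearD /= !trmx_mul [W^T *m Z^T + _]addrC.
Qed.

Lemma iotaE (F : fieldType) (m : nat) (c2 : (2%:R:F) != 0) (i : F) (hi : i * i = -1)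
  (Z : 'M[F]_m) :
  jemb i Z = block_mx (2^-1 *: (Z + Z^T)) ((2^-1 * i) *: (Z^T - Z))
           ((2^-1 * i) *: (Z - Z^T)) (2^-1 *: (Z + Z^T)).
Proof. exact: U2. Qed.

Unset Implicit Arguments.

Theorem lemma2p1 (F : closedFieldType) (m : nat) (char2 : (2%:R : F) != 0)
  (phi : 'M[F]_(m + m) -> 'M[F]_(m + m)) :
  jordan_aut_on (@in_J F m) phi ->
  exists Phi : 'M[F]_(m + m) -> 'M[F]_(m + m),
    jordan_aut_on (@symmx F (m + m)) Phi /\
    (forall X, in_J X -> Phi X = phi X).
Proof.
case=> phiJ phiL phiM phiI phiS.
have [i hi] : exists i : F, i * i = -1.
  have : size ('X^2 + 1 : {poly F}) != 1.
    by rewrite size_addl ?size_polyXn ?size_poly1.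
  case/closed_rootP => x; rewrite rootE !hornerE => /eqP h; exists x.
  by apply/eqP; rewrite -expr2 -addr_eq0 h.
pose kappa (X : 'M[F]_(m + m)) := ulsubmx X + i *: ursubmx X.
have iotaJ : forall Z : 'M[F]_m, in_J (jemb i Z).
  move=> Z; exists (2^-1 *: (Z + Z^T)), ((2^-1 * i) *: (Z^T - Z)).
  split; last split.
  - by apply/matrixP=> a b; rewrite !mxE addrC.
  - by apply/matrixP=> a b; rewrite !mxE; ring.
  - rewrite (iotaE char2 hi); congr block_mx.
    by apply/matrixP=> a b; rewrite !mxE; ring.
have kiota : forall Z : 'M[F]_m, kappa (jemb i Z) = Z.
  move=> Z; rewrite /kappa (iotaE char2 hi) block_mxKul block_mxKur.
  by apply/matrixP=> a b; rewrite !mxE; field: hi.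
have iotak : forall X, in_J X -> jemb i (kappa X) = X.
  move=> X [A [B [hA [hB ->]]]].
  rewrite /kappa block_mxKul block_mxKur (iotaE char2 hi).
  rewrite [(_ + _)^T]linearD /= [(_ *: _)^T]linearZ /= hA hB.
  by congr block_mx; apply/matrixP=> a b; rewrite !mxE; field: hi.
have iotaL : forall a (Z W : 'M[F]_m), jemb i (a *: Z + W) = a *: jemb i Z + jemb i W.
  move=> a Z W; rewrite !(iotaE char2 hi) scale_block_mx add_block_mx.
  by congr block_mx; apply/matrixP=> x y; rewrite !mxE; ring.
have kappaL : forall a (X Y : 'M[F]_(m + m)), kappa (a *: X + Y) = a *: kappa X + kappa Y.
  by move=> a X Y; apply/matrixP=> x y; rewrite !mxE; ring.
pose psi (Z : 'M[F]_m) := kappa (phi (jemb i Z)).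
have ipsi : forall Z : 'M[F]_m, jemb i (psi Z) = phi (jemb i Z).
  by move=> Z; rewrite iotak //; apply: phiJ.
have Hlin : forall a (X Y : 'M[F]_m), psi (a *: X + Y) = a *: psi X + psi Y.
  by move=> a X Y; rewrite /psi iotaL phiL // kappaL.
have psi0 : psi 0 = 0.
  have h := Hlin 1 0 0; rewrite !scale1r addr0 in h.
  by apply: (addrI (psi 0)); rewrite addr0 -h.
have Hjp : forall Z W : 'M[F]_m, psi (jprod Z W) = jprod (psi Z) (psi W).
  move=> Z W; rewrite {1}/psi (iota_jprod char2 hi) phiM // -!ipsi.
  by rewrite -(iota_jprod char2 hi) kiota.
have Hjor : forall X Y : 'M[F]_m, psi (X *m Y + Y *m X) = psi X *m psi Y + psi Y *m psi X.
  move=> X Y.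
  have e : forall (A : 'M[F]_m), A = 2%:R *: (2^-1 *: A) + 0.
    by move=> A; rewrite addr0 scalerA divff // scale1r.
  rewrite [X *m Y + _]e Hlin psi0 addr0 Hjp /jprod.
  by rewrite scalerA divff // scale1r.
have Hinj : forall X : 'M[F]_m, psi X = 0 -> X = 0.
  move=> X hX.
  have : phi (jemb i X) = phi (jemb i 0) by rewrite -!ipsi hX psi0.
  move/phiI => /(_ (iotaJ X) (iotaJ 0)) h.
  by rewrite -(kiota X) h kiota.
have Hsurj : forall Y : 'M[F]_m, exists X, psi X = Y.
  move=> Y; have [X [JX hX]] := phiS _ (iotaJ Y).
  by exists (kappa X); rewrite /psi iotak // hX kiota.
have [S [uS HS]] := jordan_class char2 Hlin Hjor Hinj Hsurj.
have [D [DK Dc]] : exists D : 'M[F]_(m + m), D^T *m Kmx F m *m D = Kmx F m /\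
    forall Z, D *m block_mx Z 0 0 Z^T = block_mx (psi Z) 0 0 (psi Z)^T *m D.
  case: HS => h.
    exists (block_mx S 0 0 (invmx S)^T); split; first exact: Dh_K.
    by move=> Z; apply: Dh_comm.
  exists (block_mx 0 S (invmx S)^T 0); split; first exact: Da_K.
  by move=> Z; apply: Da_comm.
pose U := Umx m i; pose U' := Upmx m i.
have [Q [QQ Qi]] : exists Q : 'M[F]_(m + m), Q^T *m Q = 1%:M /\
    forall Z : 'M[F]_m, Q *m jemb i Z = jemb i (psi Z) *m Q.
pose Q := U *m D *m U'.
exists Q; split.
  have e : Q^T *m Q = U'^T *m (D^T *m (U^T *m U) *m D) *m U'.
    by rewrite /Q !trmx_mul !mulmxA.
  rewrite e (U3 _ char2 hi).
  rewrite -(scalemxAr 2%:R D^T (Kmx F m)) -(scalemxAl 2%:R (D^T *m Kmx F m) D) DK.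
  rewrite -(scalemxAr 2%:R U'^T (Kmx F m)) -(scalemxAl 2%:R (U'^T *m Kmx F m) U').
  by rewrite (U4 _ char2 hi) scalerA divff // scale1r.
move=> Z; rewrite /Q /jemb (UU char2 hi) (UU char2 hi) -mulmxA Dc mulmxA.
  by [].
have QQ' : Q *m Q^T = 1%:M by apply: mulmx1C.
pose Phi X := Q *m X *m Q^T.
exists Phi; split.
  split.
  - by move=> X; rewrite /symmx /Phi !trmx_mul trmxK mulmxA => ->.
  - move=> a X Y _ _; rewrite /Phi mulmxDr mulmxDl -scalemxAr -scalemxAl.
    by [].
  - move=> X Y _ _; rewrite /Phi /jprod.
    rewrite -scalemxAr -scalemxAl mulmxDr mulmxDl.
    congr (_ *: _); congr (_ + _).
      by rewrite !mulmxA -(mulmxA _ Q^T Q) QQ mulmx1.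
    by rewrite !mulmxA -(mulmxA _ Q^T Q) QQ mulmx1.
  - move=> X Y _ _; rewrite /Phi => h.
    have := congr1 (fun M : 'M[F]_(m + m) => Q^T *m M *m Q) h.
    by rewrite /= !mulmxA QQ !mul1mx -!mulmxA QQ !mulmx1.
  - move=> Y hY; exists (Q^T *m Y *m Q); split.
      by rewrite /symmx !trmx_mul trmxK hY mulmxA.
    by rewrite /Phi !mulmxA QQ' mul1mx -!mulmxA QQ' mulmx1.
move=> X JX; rewrite -(iotak X JX) /Phi Qi -mulmxA QQ' mulmx1 ipsi.
by [].
Qed.
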